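(* Let $\mathbb{F}$ be $\mathbb{R}$ or $\mathbb{C}$. Let $U,V\in\mathbb{F}(\epsilon)^{r\times n}$, $A_0\in\mathbb{F}(\epsilon)^{r\times r}$, let $X$ be the $n\times n$ diagonal matrix with diagonal entries $x_1,\ldots,x_n$, and let $P=\det(A_0+UXV^T)$. Let $X'$ be the $(2n+r)\times(2n+r)$ diagonal matrix with diagonal entries $x_1,\ldots,x_{2n+r}$. Then there exist $U',V'\in\mathbb{F}(\epsilon)^{(n+r)\times(2n+r)}$ such that: (i) if $Q$ denotes the polynomial in $x_1,\ldots,x_n$ obtained by setting $x_{n+1}=\cdots=x_{2n+r}=1$ in $\det(U'X'V'^T)$, then $P=Q$; (ii) if $\lim_{\epsilon\to0}P$ exists, then $\lim_{\epsilon\to0}\det(U'X'V'^T)$ also exists.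
   Context: $\mathbb{F}(\epsilon)$ is the field of rational functions in the indeterminate $\epsilon$; $x_1,\ldots,x_{2n+r}$ are indeterminates. For a polynomial in the $x_i$ with coefficients in $\mathbb{F}(\epsilon)$, its limit as $\epsilon\to0$ is said to exist if the limit at $\epsilon=0$ of the coefficient of every monomial exists, and the limit is then taken coefficientwise. *)

(* Defs.v *)
From HB Require Import structures.
From mathcomp Require Import all_boot all_order all_algebra.
From mathcomp Require Import mpoly.
From mathcomp Require Import all_classical all_reals all_analysis.
From mathcomp Require Import complex.
Set Implicit Arguments. Unset Strict Implicit. Unset Printing Implicit Defensive.
Import Order.TTheory GRing.Theory Num.Theory.
Import numFieldNormedType.Exports.
Local Open Scope classical_set_scope.
Local Open Scope ring_scope.

Notation ratfun F := {fraction {poly F}}.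

Definition has_lim0 (F : numFieldType) (f : ratfun F) : Prop :=
  exists (a b : {poly F}), b != 0 /\ f = (tofrac a) / (tofrac b) /\
    exists L : F, (fun e : F => a.[e] / b.[e]) @ 0^' --> L.

Definition mpoly_has_lim0 (F : numFieldType) (m : nat)
  (p : mpoly.mpoly m (ratfun F)) : Prop :=
  forall mon : mpoly.multinom m, has_lim0 (mpoly.mcoeff mon p).

Definition mxC (F : numFieldType) (k p q : nat) (M : 'M[ratfun F]_(p, q))
  : 'M[mpoly.mpoly k (ratfun F)]_(p, q) := map_mx (@mpoly.mpolyC k _) M.

Definition Xdiag (F : numFieldType) (k : nat) : 'M[mpoly.mpoly k (ratfun F)]_k :=
  diag_mx (\row_(i < k) @mpoly.mpolyX k (ratfun F) (mpoly.mnm1 i)).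

Definition detP (F : numFieldType) (r n : nat) (A0 : 'M[ratfun F]_r)
  (U V : 'M[ratfun F]_(r, n)) : mpoly.mpoly n (ratfun F) :=
  \det (mxC n A0 + mxC n U *m Xdiag F n *m (mxC n V)^T).

Definition detPP (F : numFieldType) (r n : nat) (U' V' : 'M[ratfun F]_(n + r, 2 * n + r))
  : mpoly.mpoly (2 * n + r) (ratfun F) :=
  \det (mxC (2 * n + r) U' *m Xdiag F (2 * n + r) *m (mxC (2 * n + r) V')^T).

(* substitution x_{n+1} = ... = x_{2n+r} = 1 (and x_i |-> x_i for i <= n) *)
Definition subst_ones (F : numFieldType) (n r : nat)
  (p : mpoly.mpoly (2 * n + r) (ratfun F)) : mpoly.mpoly n (ratfun F) :=
  mpoly.comp_mpoly
    [tuple (if @insub nat (fun i => i < n)%N _ (val i) is Some j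
            then @mpoly.mpolyX n (ratfun F) (mpoly.mnm1 j) else 1)
       | i < 2 * n + r] p.

Definition lemma12_stmt (F : numFieldType) : Prop :=
  forall (r n : nat) (U V : 'M[ratfun F]_(r, n)) (A0 : 'M[ratfun F]_r),
  exists U' V' : 'M[ratfun F]_(n + r, 2 * n + r),
    detP A0 U V = @subst_ones F n r (detPP U' V') /\
    (mpoly_has_lim0 (detP A0 U V) -> mpoly_has_lim0 (detPP U' V')).

(* Main.v *)
Require Import Defs.
From HB Require Import structures.
From mathcomp Require Import all_boot all_order all_algebra.
From mathcomp Require Import mpoly.
From mathcomp Require Import all_classical all_reals all_analysis.
From mathcomp Require Import complex.
From mathcomp Require Import perm.
Set Implicit Arguments. Unset Strict Implicit. Unset Printing Implicit Defensive.
Import Order.TTheory GRing.Theory Num.Theory.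
Import numFieldNormedType.Exports.
Local Open Scope ring_scope.
Lemma det_expand (R : comRingType) (N p K : nat) (h : 'I_K -> 'X_{1..N})
  (c : 'I_p -> 'I_p -> 'I_K -> R) :
  \det (\matrix_(i, j) (\sum_k c i j k *: 'X_[h k]) : 'M[{mpoly R[N]}]_p) =
  \sum_(t : (prod (perm_of 'I_p) {ffun 'I_p -> 'I_K}))
     (((-1) ^+ t.1 * \prod_i c i (t.1 i) (t.2 i)) *: 'X_[\sum_i h (t.2 i)]).
Proof.
rewrite /determinant.
transitivity (\sum_(s : 'S_p) \sum_(f : {ffun 'I_p -> 'I_K})
   (((-1) ^+ s * \prod_i c i (s i) (f i)) *: 'X_[\sum_i h (f i)] : {mpoly R[N]})).
  apply: eq_bigr => s _.
  under eq_bigr do rewrite mxE.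
  rewrite bigA_distr_bigA mulr_sumr; apply: eq_bigr => f _.
  rewrite scaler_prod (big_morph (@mpolyX N R) (@mpolyXD N R) (@mpolyX0 N R)).
  by rewrite -(rmorph_sign (@mpolyC N R)) mul_mpolyC scalerA.
by rewrite pair_big /=.
Qed.

Lemma mcoeff_sumZX (T : finType) (R : ringType) (N : nat) (d : T -> R)
  (g : T -> 'X_{1..N}) m :
  (\sum_t d t *: 'X_[g t] : {mpoly R[N]})@_m = \sum_t d t * (g t == m)%:R.
Proof.
rewrite raddf_sum /=; apply: eq_bigr => t _.
by rewrite mcoeffZ mcoeffX.
Qed.

Lemma coef_transfer (T : finType) (R : ringType) (N N' : nat) (d : T -> R)
  (g1 : T -> 'X_{1..N}) (g2 : T -> 'X_{1..N'}) (adm : pred T) :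
  (forall t, d t != 0 -> adm t) ->
  (forall t t', adm t -> adm t' -> (g1 t == g1 t') = (g2 t == g2 t')) ->
  forall m, (\sum_t d t *: 'X_[g1 t] : {mpoly R[N]})@_m = 0 \/
    exists m', (\sum_t d t *: 'X_[g1 t] : {mpoly R[N]})@_m =
               (\sum_t d t *: 'X_[g2 t] : {mpoly R[N']})@_m'.
Proof.
move=> hadm hg m.
have [/existsP [t0 /andP [a0 /eqP e0]] | hn] := boolP [exists t, adm t && (g1 t == m)].
  right; exists (g2 t0); rewrite !mcoeff_sumZX; apply: eq_bigr => t _.
  have [-> | nz] := eqVneq (d t) 0; first by rewrite !mul0r.
  by rewrite -e0 hg // hadm.
left; rewrite mcoeff_sumZX; apply: big1 => t _.
have [-> | nz] := eqVneq (d t) 0; first by rewrite mul0r.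
case: eqP => [e|]; last by rewrite mulr0.
by move: hn; rewrite negb_exists => /forallP /(_ t); rewrite hadm // e eqxx.
Qed.

Lemma has_lim0_0 (F : numFieldType) : has_lim0 (0 : ratfun F).
Proof.
exists 0, 1; split; first exact: oner_neq0.
split; first by rewrite rmorph0 mul0r.
exists 0; have -> : (fun e : F => (0 : {poly F}).[e] / (1 : {poly F}).[e]) = fun=> 0.
  by apply: funext => e; rewrite horner0 mul0r.
exact: cvg_cst.
Qed.
Section Constr.
Context (F : numFieldType) (r n : nat).
Local Notation K := (ratfun F).
Local Notation N := (2 * n + r)%N.

Lemma E2 : (2 * n + r = (n + n) + r)%N.
Proof. by rewrite mul2n addnn. Qed.

Lemma split_l m p (i : 'I_m) : fintype.split (lshift p i) = inl i.
Proof. exact: (unsplitK (inl _ i)). Qed.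
Lemma split_r m p (i : 'I_p) : fintype.split (rshift m i) = inr i.
Proof. exact: (unsplitK (inr _ i)). Qed.

Definition kind (k : 'I_N) : ('I_n + 'I_n) + 'I_r :=
  match fintype.split (cast_ord E2 k) with inl a => inl (fintype.split a) | inr l => inr l end.
Definition xk (a : 'I_n) : 'I_N := cast_ord (esym E2) (lshift r (lshift n a)).
Definition yk (a : 'I_n) : 'I_N := cast_ord (esym E2) (lshift r (rshift n a)).
Definition zk (l : 'I_r) : 'I_N := cast_ord (esym E2) (rshift (n + n) l).

Variant kind_spec (k : 'I_N) : ('I_n + 'I_n) + 'I_r -> Type :=
| KindX a of k = xk a : kind_spec k (inl (inl a))
| KindY a of k = yk a : kind_spec k (inl (inr a))
| KindZ l of k = zk l : kind_spec k (inr l).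

Lemma kindP k : kind_spec k (kind k).
Proof.
rewrite /kind; have := cast_ordK E2 k.
rewrite -(fintype.splitK (cast_ord E2 k)).
case: (fintype.split (cast_ord E2 k)) => [a|l] /= <-.
  rewrite -(fintype.splitK a); case: (fintype.split a) => [b|b] /=.
  - by rewrite !split_l; constructor.
  - by rewrite split_l split_r; constructor.
by rewrite split_r; constructor.
Qed.

Lemma kind_xk a : kind (xk a) = inl (inl a).
Proof. by rewrite /kind /xk cast_ordKV !split_l. Qed.
Lemma kind_yk a : kind (yk a) = inl (inr a).
Proof. by rewrite /kind /yk cast_ordKV split_l split_r. Qed.
Lemma kind_zk l : kind (zk l) = inr l.
Proof. by rewrite /kind /zk cast_ordKV split_r. Qed.

Lemma val_xk a : val (xk a) = val a. Proof. by []. Qed.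

Lemma sum_kinds (V : nmodType) (G : 'I_N -> V) :
  \sum_k G k = \sum_a G (xk a) + \sum_a G (yk a) + \sum_l G (zk l).
Proof.
rewrite (reindex (cast_ord (esym E2))); last first.
  by exists (cast_ord E2) => x _; rewrite ?cast_ordK ?cast_ordKV.
by rewrite big_split_ord /= big_split_ord.
Qed.

Definition rowk (k : 'I_N) : 'I_(n + r) :=
  match kind k with inl (inl a) | inl (inr a) => lshift r a | inr l => rshift n l end.

Variables (U V : 'M[K]_(r, n)) (A0 : 'M[K]_r).

Definition Up : 'M[K]_(n + r, N) := \matrix_(i, k) (i == rowk k)%:R.
Definition Vp : 'M[K]_(n + r, N) := \matrix_(j, k)
  match kind k with
  | inl (inl a) => match fintype.split j with inl _ => 0 | inr l => - V l a end
  | inl (inr a) => (j == lshift r a)%:R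
  | inr l => match fintype.split j with inl b => U l b | inr l' => A0 l l' end
  end.


Lemma M_entry (p : nat) (A B : 'M[K]_(p, N)) :
  mxC N A *m Xdiag F N *m (mxC N B)^T =
  \matrix_(i, j) \sum_k (A i k * B j k) *: 'X_[U_(k)].
Proof.
apply/matrixP => i j; rewrite /Xdiag mul_mx_diag !mxE; apply: eq_bigr => k _.
rewrite !mxE -!mul_mpolyC.
by rewrite rmorphM /= mulrAC.
Qed.

Definition h2 (k : 'I_N) : 'X_{1..n} :=
  match kind k with inl (inl a) => U_(a)%MM | _ => 0%MM end.

Lemma subst_X k : @subst_ones F n r ('X_[U_(k)]) = 'X_[h2 k].
Proof.
rewrite /subst_ones comp_mpolyXU -tnth_nth tnth_mktuple /h2.
case: insubP => [j jlt vj | nlt].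
  case: kindP => [a|a|l] ek; subst k; rewrite ?kind_xk ?kind_yk ?kind_zk.
  - by congr mpolyX; congr mnm1; apply: val_inj; rewrite vj.
  - by move: jlt; rewrite /= ltnNge leq_addr.
  - by move: jlt; rewrite /= -addnA ltnNge leq_addr.
case: kindP => [a|a|l] ek; subst k; rewrite ?kind_xk ?kind_yk ?kind_zk ?mpolyX0 //.
by move: nlt; rewrite /= ltn_ord.
Qed.


Lemma rowk_xk a : rowk (xk a) = lshift r a. Proof. by rewrite /rowk kind_xk. Qed.
Lemma rowk_yk a : rowk (yk a) = lshift r a. Proof. by rewrite /rowk kind_yk. Qed.
Lemma rowk_zk l : rowk (zk l) = rshift n l. Proof. by rewrite /rowk kind_zk. Qed.
Lemma h2_xk a : h2 (xk a) = U_(a)%MM. Proof. by rewrite /h2 kind_xk. Qed.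
Lemma h2_yk a : h2 (yk a) = 0%MM. Proof. by rewrite /h2 kind_yk. Qed.
Lemma h2_zk l : h2 (zk l) = 0%MM. Proof. by rewrite /h2 kind_zk. Qed.

Lemma sum_delta (I : finType) (W : lmodType K) (a : I) (c : I -> K) (x : I -> W) :
  \sum_a' (((a == a')%:R * c a') *: x a') = c a *: x a.
Proof.
rewrite (bigD1 a) //= eqxx mul1r big1 ?addr0 // => a' ne.
by rewrite eq_sym (negbTE ne) mul0r scale0r.
Qed.

Definition Bm : 'M[{mpoly K[n]}]_(n, r) := - (Xdiag F n *m (mxC n V)^T).

Lemma Msubst_block :
  (\matrix_(i, j) \sum_k (Up i k * Vp j k) *: 'X_[h2 k] : 'M[{mpoly K[n]}]_(n + r))
  = block_mx 1 Bm (mxC n U) (mxC n A0).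
Proof.
apply/matrixP => i j.
rewrite -(fintype.splitK i) -(fintype.splitK j).
case: (fintype.split i) => a; case: (fintype.split j) => b /=;
rewrite ?block_mxEul ?block_mxEur ?block_mxEdl ?block_mxEdr !mxE sum_kinds;
rewrite /Up /Vp;
under eq_bigr do rewrite !mxE rowk_xk kind_xk h2_xk ?split_l ?split_r ?eq_lshift ?eq_rshift ?eq_lrshift ?eq_rlshift ?mul0r ?mulr0 ?scale0r;
under [X in _ + X + _]eq_bigr do rewrite !mxE rowk_yk kind_yk h2_yk ?split_l ?split_r ?eq_lshift ?eq_rshift ?eq_lrshift ?eq_rlshift ?mul0r ?mulr0 ?scale0r;
under [X in _ + X]eq_bigr do rewrite !mxE rowk_zk kind_zk h2_zk ?split_l ?split_r ?eq_lshift ?eq_rshift ?eq_lrshift ?eq_rlshift ?mul0r ?mulr0 ?scale0r;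
rewrite ?big1_eq ?sum_delta ?add0r ?addr0 ?mpolyX0.
- by rewrite eq_sym; case: eqP => _; rewrite ?scale1r ?scale0r.
- rewrite (bigD1 a) //= big1 ?addr0 => [|j0 ne]; last first.
    by rewrite /Xdiag !mxE eq_sym (negbTE ne) mulr0n mul0r.
  by rewrite /Xdiag !mxE eqxx mulr1n mulrC mul_mpolyC scaleNr.
- by rewrite alg_mpolyC.
- by rewrite alg_mpolyC.
Qed.


Lemma det_block : \det (block_mx 1 Bm (mxC n U) (mxC n A0)) = detP A0 U V.
Proof.
have -> : block_mx 1 Bm (mxC n U) (mxC n A0) =
  block_mx 1 0 (mxC n U) 1 *m block_mx 1 Bm 0 (mxC n A0 - mxC n U *m Bm).
  rewrite mulmx_block !mul1mx !mulmx1 !mul0mx !addr0.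
  by rewrite addrC subrK.
rewrite det_mulmx det_lblock det_ublock !det1 !mul1r.
by rewrite /detP /Bm mulmxN opprK mulmxA.
Qed.

Lemma part_i : detP A0 U V = @subst_ones F n r (detPP Up Vp).
Proof.
rewrite /detPP M_entry -det_block -Msubst_block.
rewrite /subst_ones -det_map_mx; congr (\det _); apply/matrixP => i j.
rewrite !mxE raddf_sum; apply: eq_bigr => k _.
by rewrite /= comp_mpolyZ -[comp_mpoly _ _]/(subst_ones _) subst_X.
Qed.


Definition unkind (s : ('I_n + 'I_n) + 'I_r) : 'I_N :=
  match s with inl (inl a) => xk a | inl (inr a) => yk a | inr l => zk l end.
Lemma kindK : cancel kind unkind.
Proof. by move=> k; case: kindP => [a|a|l] ->. Qed.
Lemma kind_inj : injective kind. Proof. exact: can_inj kindK. Qed.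

Lemma eq_kind k k' : (k == k') = (kind k == kind k').
Proof. by apply/eqP/eqP => [->|/kind_inj]. Qed.

Definition g1 (f : {ffun 'I_(n + r) -> 'I_N}) : 'X_{1..N} := (\sum_i U_(f i))%MM.
Definition g2 (f : {ffun 'I_(n + r) -> 'I_N}) : 'X_{1..n} := (\sum_i h2 (f i))%MM.
Definition adm (f : {ffun 'I_(n + r) -> 'I_N}) := [forall i, rowk (f i) == i].

Lemma h2E k a : h2 k a = (k == xk a).
Proof.
rewrite eq_kind kind_xk.
case: kindP => [a'|a'|l] ->; rewrite ?h2_xk ?h2_yk ?h2_zk ?kind_xk ?kind_yk ?kind_zk ?mnm0E //.
by rewrite mnm1E.
Qed.

Lemma coord_lemma (G : 'I_N -> nat) f a : adm f ->
  (forall k, G k = (k == xk a)) ->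
  \sum_i G (f i) = (f (lshift r a) == xk a).
Proof.
move=> /forallP hf hG; rewrite (bigD1 (lshift r a)) //= big1 ?addr0 ?hG // => i ne.
rewrite hG; case: eqP => // e.
by move: ne; have := hf i; rewrite e rowk_xk => /eqP ->; rewrite eqxx.
Qed.

Lemma g1_coord f a : adm f -> g1 f (xk a) = (f (lshift r a) == xk a).
Proof.
move=> hf; rewrite /g1 mnm_sumE.
by apply: (coord_lemma (G := fun k => (U_(k))%MM (xk a))) => // k; exact: mnm1E.
Qed.

Lemma g2_coord f a : adm f -> g2 f a = (f (lshift r a) == xk a).
Proof.
move=> hf; rewrite /g2 mnm_sumE.
by apply: (coord_lemma (G := fun k => h2 k a)) => // k; exact: h2E.
Qed.

Lemma rowk_l k a : rowk k = lshift r a -> k = xk a \/ k = yk a.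
Proof.
case: (kindP k) => [a'|a'|l] ->; rewrite ?rowk_xk ?rowk_yk ?rowk_zk.
- by move/lshift_inj ->; left.
- by move/lshift_inj ->; right.
by move/eqP; rewrite eq_rlshift.
Qed.

Lemma rowk_r k l : rowk k = rshift n l -> k = zk l.
Proof.
case: (kindP k) => [a'|a'|l'] ->; rewrite ?rowk_xk ?rowk_yk ?rowk_zk.
- by move/eqP; rewrite eq_lrshift.
- by move/eqP; rewrite eq_lrshift.
by move/rshift_inj ->.
Qed.

Lemma yx_neq a : (yk a == xk a) = false.
Proof. by rewrite eq_kind kind_xk kind_yk. Qed.

Lemma adm_eq f f' : adm f -> adm f' ->
  (forall a, (f (lshift r a) == xk a) = (f' (lshift r a) == xk a)) -> f = f'.
Proof.
move=> /forallP hf /forallP hf' he; apply/ffunP => i.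
rewrite -(fintype.splitK i); case: (fintype.split i) => [a|l] /=.
  have := he a.
  case: (rowk_l (eqP (hf (lshift r a)))) => ->;
  case: (rowk_l (eqP (hf' (lshift r a)))) => -> //;
  by rewrite eqxx yx_neq.
by rewrite (rowk_r (eqP (hf (rshift n l)))) (rowk_r (eqP (hf' (rshift n l)))).
Qed.

Lemma nat_bool_inj (b b' : bool) : (b : nat) = b' -> b = b'.
Proof. by case: b; case: b'. Qed.

Lemma g_eq f f' : adm f -> adm f' -> (g1 f == g1 f') = (g2 f == g2 f').
Proof.
move=> hf hf'; apply/eqP/eqP => [e|e]; congr g2 + congr g1; apply: adm_eq => // a.
  by apply: nat_bool_inj; rewrite -g1_coord // -g1_coord // e.
by apply: nat_bool_inj; rewrite -g2_coord // -g2_coord // e.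
Qed.


Definition dcoef (t : prod (perm_of 'I_(n + r)) {ffun 'I_(n + r) -> 'I_N}) : K :=
  (-1) ^+ t.1 * \prod_i (Up i (t.2 i) * Vp (t.1 i) (t.2 i)).

Lemma dcoef_adm t : dcoef t != 0 -> adm t.2.
Proof.
move=> nz; apply/forallP => i; apply: contraNT nz => hne.
rewrite eq_sym in hne; rewrite /dcoef (bigD1 i) //= /Up mxE (negbTE hne).
by rewrite !mul0r mulr0.
Qed.

Lemma e1 : detPP Up Vp = \sum_t dcoef t *: 'X_[g1 t.2].
Proof.
by rewrite /detPP M_entry (det_expand (fun k => U_(k)%MM) (fun i j k => Up i k * Vp j k)).
Qed.

Lemma e2 : detP A0 U V = \sum_t dcoef t *: 'X_[g2 t.2].
Proof.
by rewrite -det_block -Msubst_block (det_expand h2 (fun i j k => Up i k * Vp j k)).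
Qed.

Lemma part_ii : mpoly_has_lim0 (detP A0 U V) -> mpoly_has_lim0 (detPP Up Vp).
Proof.
move=> hP m; rewrite e1.
have := @coef_transfer _ _ _ _ dcoef (fun t => g1 t.2) (fun t => g2 t.2)
  (fun t => adm t.2) dcoef_adm (fun t t' => @g_eq t.2 t'.2) m.
case => [-> | [m' ->]]; first exact: has_lim0_0.
by rewrite -e2; apply: hP.
Qed.

End Constr.

Lemma stmt_all (F : numFieldType) : lemma12_stmt F.
Proof.
move=> r n U V A0; exists (Up F r n), (Vp U V A0); split.
  exact: part_i.
exact: part_ii.
Qed.

Theorem lemma12 (R : realType) : lemma12_stmt R /\ lemma12_stmt (complex R).
Proof. split; exact: stmt_all. Qed.
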